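(* The relation of $\mathcal{C}$-$\mathrm{HH}$-symmetry is not transitive on the class of $\mathcal{C}$-$\mathrm{HH}$ graphs: there exist finite connected $\mathcal{C}$-$\mathrm{HH}$ graphs $G_1,G_2,G_3$ such that $G_1,G_2$ are $\mathcal{C}$-$\mathrm{HH}$-symmetric and $G_2,G_3$ are $\mathcal{C}$-$\mathrm{HH}$-symmetric, but $G_1,G_3$ are not $\mathcal{C}$-$\mathrm{HH}$-symmetric.
   Context: Graphs are simple; subgraphs are induced. A homomorphism maps edges to edges. A graph $G$ is $\mathcal{C}$-$\mathrm{HH}$ if every homomorphism from a finite connected induced subgraph of $G$ into $G$ extends to a homomorphism $G\to G$. For graphs $G_1,G_2$, $G_1$ is $\mathcal{C}$-$\mathrm{HH}$-morphic to $G_2$ if every homomorphism from a finite connected induced subgraph $A$ of $G_1$ onto an induced subgraph $B$ of $G_2$ extends to a homomorphism $G_1 \to G_2$; $G_1,G_2$ are $\mathcal{C}$-$\mathrm{HH}$-symmetric if each is $\mathcal{C}$-$\mathrm{HH}$-morphic to the other. *)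

(* Defs.v *)
From mathcomp Require Import all_boot.
Set Implicit Arguments. Unset Strict Implicit. Unset Printing Implicit Defensive.

Definition simple_graph (T : finType) (e : rel T) : Prop :=
  symmetric e /\ irreflexive e.

Definition connected_in (T : finType) (e : rel T) (A : {set T}) : Prop :=
  (exists x, x \in A) /\
  (forall x y, x \in A -> y \in A ->
     connect [rel u v | [&& e u v, u \in A & v \in A]] x y).

Definition hom_on (T1 T2 : finType) (e1 : rel T1) (e2 : rel T2)
  (A : {set T1}) (f : T1 -> T2) : Prop :=
  forall x y, x \in A -> y \in A -> e1 x y -> e2 (f x) (f y).

Definition hom (T1 T2 : finType) (e1 : rel T1) (e2 : rel T2) (g : T1 -> T2) : Prop :=
  forall x y, e1 x y -> e2 (g x) (g y).

(* G1 is C-HH-morphic to G2: every homomorphism from a finite connected induced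
   subgraph of G1 onto (the induced subgraph of G2 on) its image extends to a
   homomorphism G1 -> G2. *)
Definition CHH_morphic (T1 T2 : finType) (e1 : rel T1) (e2 : rel T2) : Prop :=
  forall (A : {set T1}) (f : T1 -> T2),
    connected_in e1 A -> hom_on e1 e2 A f ->
    exists g : T1 -> T2, hom e1 e2 g /\ (forall x, x \in A -> g x = f x).

Definition CHH (T : finType) (e : rel T) : Prop := CHH_morphic e e.

Definition CHH_symmetric (T1 T2 : finType) (e1 : rel T1) (e2 : rel T2) : Prop :=
  CHH_morphic e1 e2 /\ CHH_morphic e2 e1.

Definition fin_conn_CHH_graph (T : finType) (e : rel T) : Prop :=
  simple_graph e /\ connected_in e [set: T] /\ CHH e.

(* Main.v *)
Require Import Defs.
From mathcomp Require Import all_boot.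
Set Implicit Arguments. Unset Strict Implicit. Unset Printing Implicit Defensive.

Section G.
Variables (T1 T2 : finType) (e1 : rel T1) (e2 : rel T2).
Definition connb (A : {set T1}) := [exists x, x \in A] && [forall x, forall y, (x \in A) ==> (y \in A) ==> connect [rel u v | [&& e1 u v, u \in A & v \in A]] x y].
Lemma connbP A : connb A <-> connected_in e1 A.
Proof.
split.
- case/andP=> /existsP[x xA] /forallP H; split; first by exists x.
  by move=> u v uA vA; move/forallP: (H u) => /(_ v); rewrite uA vA.
- case=> [[x xA] H]; apply/andP; split; first by apply/existsP; exists x.
  apply/forallP=> u; apply/forallP=> v; apply/implyP=> uA; apply/implyP=> vA; exact: H.
Qed.
End G.


Definition eI n (E : nat -> nat -> bool) : rel 'I_n := fun x y => E x y.
Arguments eI : clear implicits.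

Lemma crossP (T : Type) (r : rel T) (P : pred T) x p :
  path r x p -> P x -> ~~ P (last x p) -> exists u v, [&& r u v, P u & ~~ P v].
Proof.
elim: p x => [|y p IH] x /=; first by move=> _ ->.
case/andP=> rxy pp Px; case Py: (P y).
  by move=> H; exact: (IH y pp Py H).
by move=> _; exists x, y; rewrite rxy Px Py.
Qed.

Fixpoint allbits (k : nat) : seq (seq bool) :=
  match k with 0 => [:: [::]] | k'.+1 => let r := allbits k' in
    [seq true :: l | l <- r] ++ [seq false :: l | l <- r] end.

Lemma allbits_mem l : l \in allbits (size l).
Proof.
elim: l => [|b l IH] //=; rewrite mem_cat; case: b; [apply/orP; left|apply/orP; right];
  by rewrite mem_map // => ? ? [].
Qed.

Section N.
Variables (n m : nat) (E1 E2 : nat -> nat -> bool).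

Fixpoint funs (bits : seq bool) : seq (seq nat) :=
  match bits with
  | [::] => [:: [::]]
  | b :: bs => let r := funs bs in
      flatten [seq [seq x :: l | l <- r] | x <- (if b then iota 0 m else [:: 0])]
  end.

Lemma funs_mem bits l : size l = size bits ->
  all (fun p => if p.1 then p.2 < m else p.2 == 0) (zip bits l) -> l \in funs bits.
Proof.
elim: bits l => [|b bs IH] [|x l] //= [sz] /andP[hx hl].
apply/flattenP; exists [seq x :: l0 | l0 <- funs bs].
  apply/mapP; exists x => //; case: b hx => /=; first by rewrite mem_iota.
  by move/eqP->; rewrite inE.
by rewrite mem_map ?IH //; move=> ? ? [].
Qed.

Definition conn_nat (bits : seq bool) :=
  has (fun i => nth false bits i) (iota 0 n) &&
  all (fun sb => 
    (has (fun i => nth false sb i && nth false bits i) (iota 0 n) &&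
     has (fun j => nth false bits j && ~~ nth false sb j) (iota 0 n)) ==>
    has (fun i => has (fun j => [&& nth false sb i, nth false bits i, nth false bits j,
        ~~ nth false sb j & E1 i j]) (iota 0 n)) (iota 0 n)) (allbits n).

Definition homn (bits : seq bool) (fl : seq nat) :=
  all (fun i => all (fun j => [&& nth false bits i, nth false bits j & E1 i j] ==>
       E2 (nth 0 fl i) (nth 0 fl j)) (iota 0 n)) (iota 0 n).

Fixpoint firstSome (s : seq nat) (h : nat -> option (seq nat)) : option (seq nat) :=
  match s with
  | [::] => None
  | c :: cs => match h c with Some r => Some r | None => firstSome cs h end
  end.

Fixpoint srch (bits : seq bool) (fl : seq nat) (fuel : nat) (g : seq nat) : option (seq nat) :=
  match fuel with
  | 0 => Some g
  | fuel'.+1 =>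
    let k := size g in
    firstSome (if nth false bits k then [:: nth 0 fl k] else iota 0 m)
      (fun c => if all (fun j => (E1 j k ==> E2 (nth 0 g j) c) && (E1 k j ==> E2 c (nth 0 g j))) (iota 0 k)
                then srch bits fl fuel' (rcons g c) else None)
  end.

Definition verify (bits : seq bool) (fl g : seq nat) :=
  [&& all (fun v => v < m) g,
      all (fun i => all (fun j => E1 i j ==> E2 (nth 0 g i) (nth 0 g j)) (iota 0 n)) (iota 0 n) &
      all (fun i => nth false bits i ==> (nth 0 g i == nth 0 fl i)) (iota 0 n)].

Definition checkN :=
  all (fun bits => ~~ conn_nat bits ||
     all (fun fl => ~~ homn bits fl ||
        (if srch bits fl n [::] is Some g then (size g == n) && verify bits fl g else false))
       (funs bits))
    (allbits n).

Lemma nth_mapI (T : Type) (x0 : T) (P : 'I_n -> T) (x : 'I_n) :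
  nth x0 [seq P y | y <- enum 'I_n] x = P x.
Proof. by rewrite (nth_map x) ?size_enum_ord // nth_ord_enum. Qed.

Lemma conn_natP (A : {set 'I_n}) : connected_in (eI n E1) A ->
  conn_nat [seq x \in A | x <- enum 'I_n].
Proof.
case=> [[x0 x0A] H]; apply/andP; split.
  by apply/hasP; exists (val x0); rewrite ?mem_iota ?ltn_ord // nth_mapI.
apply/allP=> sb _; apply/implyP=> /andP[/hasP[i ii /andP[si iA]] /hasP[j jj /andP[jA sj]]].
move: ii jj; rewrite !mem_iota !add0n => /andP[_ lin] /andP[_ ljn].
move: iA jA si sj.
have -> : i = Ordinal lin by []. have -> : j = Ordinal ljn by [] .
set x := Ordinal lin; set y := Ordinal ljn.
rewrite !nth_mapI => xA yA sx sy.
case/connectP: (H x y xA yA) => p pp ly.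
have := crossP (P := fun u : 'I_n => nth false sb u) pp sx.
rewrite -ly => /(_ sy) [u [v /and3P[/and3P[euv uA vA] su sv]]].
apply/hasP; exists (val u); first by rewrite mem_iota ltn_ord.
apply/hasP; exists (val v); first by rewrite mem_iota ltn_ord.
by rewrite !nth_mapI uA vA su sv.
Qed.

Lemma checkNP : checkN -> CHH_morphic (eI n E1) (eI m E2).
Proof.
move=> /allP H A f cA hA.
set bits := [seq x \in A | x <- enum 'I_n].
have bb : bits \in allbits n.
  by rewrite -(size_enum_ord n) -(size_map (fun x => x \in A) (enum 'I_n)) allbits_mem.
have /orP[] := H bits bb.
  by rewrite conn_natP.
set fl := [seq (if x \in A then val (f x) else 0) | x <- enum 'I_n].
move=> /allP /(_ fl).
have -> : fl \in funs bits.
  apply: funs_mem; first by rewrite !size_map.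
  rewrite zip_map all_map; apply/allP=> x _ /=; by case: (x \in A).
have hh : homn bits fl.
  apply/allP=> i; rewrite mem_iota add0n => /andP[_ lin].
  apply/allP=> j; rewrite mem_iota add0n => /andP[_ ljn].
  have -> : i = Ordinal lin by []. have -> : j = Ordinal ljn by [].
  rewrite !nth_mapI; apply/implyP=> /and3P[iA jA eij]; rewrite iA jA.
  exact: (hA _ _ iA jA eij).
move/(_ isT); rewrite hh /=.
case: (srch bits fl n [::]) => // g /andP[/eqP szg /and3P[/allP gm /allP gh /allP ga]].
pose g' := fun x : 'I_n => insubd (f x) (nth 0 g x) : 'I_m.
have vg x : val (g' x) = nth 0 g x.
  rewrite val_insubd; case: ifP => // /negbT; rewrite gm //.
  by apply: mem_nth; rewrite szg.
exists g'; split.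
- move=> x y; rewrite /eI /= !vg => exy.
  have := gh x; rewrite mem_iota add0n ltn_ord => /(_ isT) /allP /(_ y).
  by rewrite mem_iota add0n ltn_ord exy => /(_ isT).
- move=> x xA; apply: val_inj; rewrite vg.
  have := ga x; rewrite mem_iota add0n ltn_ord => /(_ isT).
  by rewrite /bits /fl !nth_mapI xA => /eqP ->.
Qed.
End N.

Definition EK2 (i j : nat) := i != j.
Definition EC6 (i j : nat) := (i.+1 %% 6 == j) || (j.+1 %% 6 == i).
Definition EP5 (i j : nat) := (i.+1 == j) || (j.+1 == i).


Lemma chC6 : CHH_morphic (eI 6 EC6) (eI 6 EC6).
Proof. apply: checkNP; vm_compute; reflexivity. Qed.
Lemma chP5 : CHH_morphic (eI 5 EP5) (eI 5 EP5).
Proof. apply: checkNP; vm_compute; reflexivity. Qed.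
Lemma chK2 : CHH_morphic (eI 2 EK2) (eI 2 EK2).
Proof. apply: checkNP; vm_compute; reflexivity. Qed.
Lemma chC6K2 : CHH_morphic (eI 6 EC6) (eI 2 EK2).
Proof. apply: checkNP; vm_compute; reflexivity. Qed.
Lemma chK2C6 : CHH_morphic (eI 2 EK2) (eI 6 EC6).
Proof. apply: checkNP; vm_compute; reflexivity. Qed.
Lemma chP5K2 : CHH_morphic (eI 5 EP5) (eI 2 EK2).
Proof. apply: checkNP; vm_compute; reflexivity. Qed.
Lemma chK2P5 : CHH_morphic (eI 2 EK2) (eI 5 EP5).
Proof. apply: checkNP; vm_compute; reflexivity. Qed.

Lemma pre_conn n (e : rel 'I_n) k : 0 < k <= n -> symmetric e ->
  (forall x y : 'I_n, val y = (val x).+1 -> y < k -> e x y) ->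
  connected_in e [set x : 'I_n | x < k].
Proof.
case/andP=> k0 kn se hs.
have n0 : 0 < n by apply: leq_trans kn.
set x0 := Ordinal n0.
have x0A : x0 \in [set x : 'I_n | x < k] by rewrite inE.
set rA := [rel u v | [&& e u v, u \in [set x : 'I_n | x < k] & v \in [set x : 'I_n | x < k]]].
have sA : connect_sym rA.
  apply: sym_connect_sym => u v /=; rewrite se; by case: (e v u); case: (u \in _); case: (v \in _).
have H : forall i, i < k -> forall x : 'I_n, val x = i -> connect rA x0 x.
  elim=> [|i IH] ik x vx.
    by have -> : x = x0 by apply: val_inj.
  have lin : i < n by apply: leq_trans (ltnW ik) kn.
  apply: connect_trans (IH (ltnW ik) (Ordinal lin) erefl) (connect1 _).
  by rewrite /= !inE hs ?vx //= ltnW.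
split; first by exists x0.
move=> x y; rewrite !inE => xk yk.
apply: connect_trans (H _ yk y erefl); rewrite sA; exact: H _ xk x erefl.
Qed.

Lemma full_conn n (e : rel 'I_n) : 0 < n -> symmetric e ->
  (forall x y : 'I_n, val y = (val x).+1 -> e x y) -> connected_in e [set: 'I_n].
Proof.
move=> n0 se hs.
have -> : [set: 'I_n] = [set x : 'I_n | x < n] by apply/setP=> x; rewrite !inE ltn_ord.
apply: pre_conn => //; first by rewrite n0 leqnn.
by move=> x y h _; apply: hs.
Qed.

Lemma fcK2 : fin_conn_CHH_graph (eI 2 EK2).
Proof.
split; last split; last exact: chK2.
- by split; [move=> x y; rewrite /eI /EK2 eq_sym | move=> x; rewrite /eI /EK2 eqxx].
- apply: full_conn => //; first by move=> x y; rewrite /eI /EK2 eq_sym.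
  by move=> x y h; rewrite /eI /EK2 h neq_ltn ltnSn.
Qed.

Lemma fcP5 : fin_conn_CHH_graph (eI 5 EP5).
Proof.
split; last split; last exact: chP5.
- split; first by move=> x y; rewrite /eI /EP5 orbC.
  by move=> x; rewrite /eI /EP5 orbb; apply/negbTE; rewrite neq_ltn ltnSn orbT.
- apply: full_conn => //; first by move=> x y; rewrite /eI /EP5 orbC.
  by move=> x y h; rewrite /eI /EP5 h eqxx.
Qed.

Lemma fcC6 : fin_conn_CHH_graph (eI 6 EC6).
Proof.
split; last split; last exact: chC6.
- split; first by move=> x y; rewrite /eI /EC6 orbC.
  by move=> [[|[|[|[|[|[|?]]]]]] ?].
- apply: full_conn => //; first by move=> x y; rewrite /eI /EC6 orbC.
  move=> x y h; rewrite /eI /EC6 h; case: x h => [[|[|[|[|[|[|?]]]]]] ?] //= h.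
  by have := ltn_ord y; rewrite h.
Qed.

Lemma notC6P5 : ~ CHH_morphic (eI 6 EC6) (eI 5 EP5).
Proof.
move=> H.
pose A := [set x : 'I_6 | x < 5].
have cA : connected_in (eI 6 EC6) A.
  apply: pre_conn => //; first by move=> x y; rewrite /eI /EC6 orbC.
  move=> x y h yk; rewrite /eI /EC6 h modn_small ?eqxx //.
  by rewrite -h ltn_ord.
have hA : hom_on (eI 6 EC6) (eI 5 EP5) A (fun x => inord x).
  move=> x y; rewrite !inE /eI /EC6 /EP5 => xA yA.
  rewrite !inordK // !modn_small //; by apply: leq_ltn_trans (ltn_ord _) _ || idtac.
have [g [hg ag]] := H A _ cA hA.
have g0 : val (g (Ordinal (isT : 0 < 6))) = 0 by rewrite ag ?inE //= inordK.
have g4 : val (g (Ordinal (isT : 4 < 6))) = 4 by rewrite ag ?inE //= inordK.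
have e50 := hg (Ordinal (isT : 5 < 6)) (Ordinal (isT : 0 < 6)) isT.
have e45 := hg (Ordinal (isT : 4 < 6)) (Ordinal (isT : 5 < 6)) isT.
move: e50 e45; rewrite /eI /EP5 g0 g4.
move: (val (g (Ordinal (isT : 5 < 6)))) => a.
by case: a => [|[|[|[|[|?]]]]].
Qed.

Theorem lemma3p3 :
  exists (T1 T2 T3 : finType) (e1 : rel T1) (e2 : rel T2) (e3 : rel T3),
    fin_conn_CHH_graph e1 /\ fin_conn_CHH_graph e2 /\ fin_conn_CHH_graph e3 /\
    CHH_symmetric e1 e2 /\ CHH_symmetric e2 e3 /\ ~ CHH_symmetric e1 e3.
Proof.
exists 'I_6, 'I_2, 'I_5, (eI 6 EC6), (eI 2 EK2), (eI 5 EP5).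
split; first exact: fcC6. split; first exact: fcK2. split; first exact: fcP5.
split; first by split; [exact: chC6K2 | exact: chK2C6].
split; first by split; [exact: chK2P5 | exact: chP5K2].
by case=> /notC6P5.
Qed.
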